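(* For $\eta>0$ and $x,y\in\mathbf{R}^3$ let $$\mathcal{R}_0(\eta;x,y)=\frac{1}{1+2\eta^2}\cdot\frac{e^{i\eta|x-y|}-e^{-i\eta|x-y|}}{4\pi|x-y|}.$$ Then for $t>1$, $$\sup_{x,y\in\mathbf{R}^3}\Big|\int_0^\infty e^{-it(\eta^4+\eta^2)}\mathcal{R}_0(\eta;x,y)(4\eta^3+2\eta)\,d\eta\Big|\lesssim |t|^{-3/2},$$ and for $0<t\le1$ the same supremum is $\lesssim|t|^{-3/4}$.
   Context: $\mathcal{R}_0(\eta;x,y)=R_0^+(\lambda;x,y)-R_0^-(\lambda;x,y)$ with $\lambda=\eta^4+\eta^2$, where $R_0^\pm(\lambda)=\lim_{\epsilon\downarrow0}(\Delta^2-\Delta-(\lambda\pm i\epsilon))^{-1}$ on $\mathbf{R}^3$ has kernel $R_0^\pm(\lambda;x,y)=\frac{1}{1+2\eta^2}\Big(\frac{e^{\pm i\eta|x-y|}}{4\pi|x-y|}-\frac{e^{-\sqrt{1+\eta^2}|x-y|}}{4\pi|x-y|}\Big)$, $\eta=(\sqrt{1/4+\lambda}-1/2)^{1/2}$. The integral over $(0,\infty)$ is understood as an (improper) oscillatory integral. *)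

(* Defs.v *)
From Stdlib Require Import Reals.
From Coquelicot Require Import Coquelicot.
Open Scope R_scope.

Definition R3 : Type := (R * R * R)%type.

Definition dist3 (x y : R3) : R :=
  let '(x1, x2, x3) := x in
  let '(y1, y2, y3) := y in
  sqrt ((x1 - y1)^2 + (x2 - y2)^2 + (x3 - y3)^2).

Definition cexpi (theta : R) : C := (cos theta, sin theta).

Definition R0ker (eta : R) (x y : R3) : C :=
  let r := dist3 x y in
  Cmult (RtoC (/ (1 + 2 * eta ^ 2)))
        (Cdiv (Cminus (cexpi (eta * r)) (cexpi (- (eta * r))))
              (RtoC (4 * PI * r))).

Definition integrand (t : R) (x y : R3) (eta : R) : C :=
  Cmult (cexpi (- (t * (eta ^ 4 + eta ^ 2))))
        (Cmult (R0ker eta x y) (RtoC (4 * eta ^ 3 + 2 * eta))).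

Definition improper_integral_0_infty (f : R -> C) (l : C) : Prop :=
  is_RInt_gen (V := C_R_CompleteNormedModule) f (at_point 0) (Rbar_locally p_infty) l.

(* Main.v *)
Require Import Defs.
From Stdlib Require Import Reals Lra Psatz.
From Coquelicot Require Import Coquelicot.
Open Scope R_scope.
Section Helpers.
Implicit Types (f g m s F : R -> R) (a b c l M x : R).
Ltac fld := field; repeat split; try (intro; lra); try lra.

Lemma cmul (f g : R -> R) x : continuous f x -> continuous g x -> continuous (fun y => f y * g y) x.
Proof. intros. apply (continuous_mult (K:=R_AbsRing) f g); auto. Qed.
Lemma cplus (f g : R -> R) x : continuous f x -> continuous g x -> continuous (fun y => f y + g y) x.
Proof. intros. apply (continuous_plus (V:=R_NormedModule) f g); auto. Qed.
Lemma cminus (f g : R -> R) x : continuous f x -> continuous g x -> continuous (fun y => f y - g y) x.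
Proof. intros. apply (continuous_minus (V:=R_NormedModule) f g); auto. Qed.
Lemma ccomp (f g : R -> R) x : continuous f x -> continuous g (f x) -> continuous (fun y => g (f y)) x.
Proof. intros. apply (continuous_comp f g); auto. Qed.
Lemma cinv (f : R -> R) x : continuous f x -> f x <> 0 -> continuous (fun y => / f y) x.
Proof. intros. apply continuous_Rinv_comp; auto. Qed.
Lemma cabs (f : R -> R) x : continuous f x -> continuous (fun y => Rabs (f y)) x.
Proof. intros. apply continuous_Rabs_comp; auto. Qed.
Lemma cex (f : R -> R) x : ex_derive f x -> continuous f x.
Proof. intros. apply (ex_derive_continuous (K:=R_AbsRing) (V:=R_NormedModule)). auto. Qed.
Lemma ccos (f : R -> R) x : continuous f x -> continuous (fun y => cos (f y)) x.
Proof. intros. apply ccomp; auto. apply cex. auto_derive; auto. Qed.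
Lemma csin (f : R -> R) x : continuous f x -> continuous (fun y => sin (f y)) x.
Proof. intros. apply ccomp; auto. apply cex. auto_derive; auto. Qed.
Lemma cder (f df : R -> R) x : is_derive f x (df x) -> continuous f x.
Proof. intros. apply cex. eexists; eauto. Qed.

Definition cont_on (f : R -> R) a b := forall x, a <= x <= b -> continuous f x.

Lemma ex_on f a b : a <= b -> cont_on f a b -> ex_RInt f a b.
Proof. intros Hab H. apply (ex_RInt_continuous (V:=R_CompleteNormedModule)). intros z Hz.
  rewrite Rmin_left in Hz by lra. rewrite Rmax_right in Hz by lra. apply H; lra. Qed.

Lemma cont_on_glob f a b : (forall x, continuous f x) -> cont_on f a b.
Proof. intros H x _; apply H. Qed.

Lemma FTC (F f : R -> R) a b : a <= b ->
  (forall x, a <= x <= b -> is_derive F x (f x)) -> cont_on f a b ->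
  @eq R (RInt f a b) (F b - F a).
Proof.
  intros Hab HD HC. apply (is_RInt_unique (V:=R_CompleteNormedModule)).
  apply (is_RInt_derive (V:=R_CompleteNormedModule) F f a b).
  - intros x Hx. rewrite Rmin_left in Hx by lra. rewrite Rmax_right in Hx by lra. apply HD; lra.
  - intros x Hx. rewrite Rmin_left in Hx by lra. rewrite Rmax_right in Hx by lra. apply HC; lra.
Qed.

Lemma RInt_minus' f g a b : ex_RInt f a b -> ex_RInt g a b ->
  @eq R (RInt (fun x => f x - g x) a b) (RInt f a b - RInt g a b).
Proof. intros. apply (RInt_minus (V:=R_CompleteNormedModule) f g a b); auto. Qed.
Lemma RInt_plus' f g a b : ex_RInt f a b -> ex_RInt g a b ->
  @eq R (RInt (fun x => f x + g x) a b) (RInt f a b + RInt g a b).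
Proof. intros. apply (RInt_plus (V:=R_CompleteNormedModule) f g a b); auto. Qed.
Lemma RInt_scal' f a b l : ex_RInt f a b ->
  @eq R (RInt (fun x => l * f x) a b) (l * RInt f a b).
Proof. intros. apply (RInt_scal (V:=R_CompleteNormedModule) f a b l); auto. Qed.
Lemma RInt_opp' f a b : ex_RInt f a b ->
  @eq R (RInt (fun x => - f x) a b) (- RInt f a b).
Proof. intros. apply (RInt_opp (V:=R_CompleteNormedModule) f a b); auto. Qed.
Lemma RInt_Chasles' f a b c : ex_RInt f a b -> ex_RInt f b c ->
  @eq R (RInt f a b + RInt f b c) (RInt f a c).
Proof. intros. apply (RInt_Chasles (V:=R_CompleteNormedModule) f a b c); auto. Qed.

Lemma RInt_ext_on f g a b : a <= b -> (forall x, a <= x <= b -> f x = g x) -> RInt f a b = RInt g a b.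
Proof. intros Hab H. apply RInt_ext. intros x Hx.
  rewrite Rmin_left in Hx by lra. rewrite Rmax_right in Hx by lra. apply H; lra. Qed.

Lemma RInt_le' f g a b : a <= b -> cont_on f a b -> cont_on g a b ->
  (forall x, a <= x <= b -> f x <= g x) -> RInt f a b <= RInt g a b.
Proof. intros. apply RInt_le; auto using ex_on. intros; apply H2; lra. Qed.

Lemma abs_RInt_le' f a b : a <= b -> cont_on f a b ->
  Rabs (RInt f a b) <= RInt (fun x => Rabs (f x)) a b.
Proof. intros. apply abs_RInt_le; auto using ex_on. Qed.

Lemma abs_RInt_maj f m a b : a <= b -> cont_on f a b -> cont_on m a b ->
  (forall x, a <= x <= b -> Rabs (f x) <= m x) -> Rabs (RInt f a b) <= RInt m a b.
Proof.
  intros Hab Hf Hm H. eapply Rle_trans. apply abs_RInt_le'; auto.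
  apply RInt_le'; auto. intros x Hx; apply cabs; auto.
Qed.

Lemma abs_RInt_const f a b M : a <= b -> cont_on f a b ->
  (forall x, a <= x <= b -> Rabs (f x) <= M) -> Rabs (RInt f a b) <= (b - a) * M.
Proof. intros. apply abs_RInt_le_const; auto using ex_on. Qed.

Lemma sign_bound (s m : R -> R) a b : a <= b -> cont_on s a b -> cont_on m a b ->
  (forall x, a <= x <= b -> Rabs (s x) <= 1) ->
  ((forall x, a <= x <= b -> 0 <= m x) \/ (forall x, a <= x <= b -> m x <= 0)) ->
  Rabs (RInt (fun x => s x * m x) a b) <= Rabs (RInt m a b).
Proof.
  intros Hab Hs Hm H1 [Hp|Hn].
  - eapply Rle_trans. apply abs_RInt_maj with (m := m); auto.
    intros x Hx; apply cmul; auto.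
    intros x Hx. rewrite Rabs_mult. rewrite (Rabs_right (m x)) by (apply Rle_ge, Hp; auto).
    specialize (H1 x Hx). specialize (Hp x Hx). nra.
    apply Rle_abs.
  - eapply Rle_trans. apply abs_RInt_maj with (m := fun x => - m x); auto.
    intros x Hx; apply cmul; auto.
    intros x Hx. apply (continuous_opp (V:=R_NormedModule) m). auto.
    intros x Hx. rewrite Rabs_mult. rewrite (Rabs_left1 (m x)) by (apply Hn; auto).
    specialize (H1 x Hx). specialize (Hn x Hx). nra.
    rewrite RInt_opp' by (apply ex_on; auto). rewrite <- Rabs_Ropp. apply Rle_abs.
Qed.

Lemma div_le1 (s0 q d : R) : Rabs s0 <= 1 -> d <= q -> 0 < d -> Rabs (s0 / q) <= 1 / d.
Proof.
  intros Hs Hq Hd. unfold Rdiv. rewrite Rabs_mult, Rabs_inv, (Rabs_right q) by lra.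
  assert (/ q <= / d) by (apply Rinv_le_contravar; lra).
  assert (0 < / q) by (apply Rinv_0_lt_compat; lra).
  assert (Rabs s0 * / q <= 1 * / q) by (apply Rmult_le_compat_r; lra). lra.
Qed.

Lemma inv_diff (u v d : R) : 0 < d -> d <= u -> d <= v -> Rabs (/ u - / v) <= 1 / d.
Proof.
  intros Hd Hu Hv.
  assert (/ u <= / d) by (apply Rinv_le_contravar; lra).
  assert (/ v <= / d) by (apply Rinv_le_contravar; lra).
  assert (0 < / u) by (apply Rinv_0_lt_compat; lra).
  assert (0 < / v) by (apply Rinv_0_lt_compat; lra).
  unfold Rdiv. rewrite Rmult_1_l. apply Rabs_le; lra.
Qed.

Lemma vdc1 (p p1 p2 : R -> R) a b d : a <= b -> 0 < d ->
  (forall x, is_derive p x (p1 x)) -> (forall x, is_derive p1 x (p2 x)) ->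
  (forall x, continuous p2 x) ->
  (forall x, a <= x <= b -> d <= p1 x) ->
  ((forall x, a <= x <= b -> 0 <= p2 x) \/ (forall x, a <= x <= b -> p2 x <= 0)) ->
  Rabs (RInt (fun x => cos (p x)) a b) <= 3 / d.
Proof.
  intros Hab Hd D0 D1 C2 Hp1 Hsg.
  assert (Cp : forall x, continuous p x) by (intro x; eapply cder; apply D0).
  assert (Cp1 : forall x, continuous p1 x) by (intro x; eapply cder; apply D1).
  set (m := fun x => p2 x * / (p1 x * p1 x)).
  assert (Cm : cont_on m a b).
  { intros x Hx. unfold m. apply cmul; auto. apply cinv. apply cmul; auto.
    specialize (Hp1 x Hx). nra. }
  assert (E1 : RInt (fun x => cos (p x) - sin (p x) * m x) a b = sin (p b) / p1 b - sin (p a) / p1 a).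
  { apply (FTC (fun x => sin (p x) / p1 x)); auto.
    - intros x Hx. specialize (Hp1 x Hx). auto_derive.
      + repeat split; try (eexists; eauto); lra.
      + replace (Derive (fun x0 => p x0) x) with (p1 x) by (symmetry; apply is_derive_unique; auto).
        replace (Derive (fun x0 => p1 x0) x) with (p2 x) by (symmetry; apply is_derive_unique; auto).
        unfold m. field. lra.
    - intros x Hx. apply cminus. apply ccos; auto. apply cmul. apply csin; auto. apply Cm; auto. }
  assert (E2 : RInt m a b = - / p1 b - - / p1 a).
  { apply (FTC (fun x => - / p1 x)); auto.
    intros x Hx. specialize (Hp1 x Hx). auto_derive.
    + repeat split; try (eexists; eauto); lra.
    + replace (Derive (fun x0 => p1 x0) x) with (p2 x) by (symmetry; apply is_derive_unique; auto). unfold m. field. lra. }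
  assert (Ccos : cont_on (fun x => cos (p x)) a b) by (intros x _; apply ccos; auto).
  assert (Csm : cont_on (fun x => sin (p x) * m x) a b) by (intros x Hx; apply cmul; [apply csin; auto| apply Cm; auto]).
  assert (E3 : RInt (fun x => cos (p x)) a b = RInt (fun x => cos (p x) - sin (p x) * m x) a b + RInt (fun x => sin (p x) * m x) a b).
  { rewrite RInt_minus' by (apply ex_on; auto). lra. }
  assert (B3 : Rabs (RInt (fun x => sin (p x) * m x) a b) <= Rabs (RInt m a b)).
  { apply sign_bound; auto. intros x _; apply csin; auto.
    intros x Hx. apply Rabs_le. apply SIN_bound.
    destruct Hsg as [H|H]; [left|right]; intros x Hx; unfold m; specialize (H x Hx);
      specialize (Hp1 x Hx); assert (0 < / (p1 x * p1 x)) by (apply Rinv_0_lt_compat; nra); nra. }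
  rewrite E3, E1. rewrite E2 in B3.
  assert (Hb := div_le1 (sin (p b)) (p1 b) d ltac:(apply Rabs_le, SIN_bound) ltac:(apply Hp1; lra) Hd).
  assert (Ha := div_le1 (sin (p a)) (p1 a) d ltac:(apply Rabs_le, SIN_bound) ltac:(apply Hp1; lra) Hd).
  assert (Hi := inv_diff (p1 a) (p1 b) d Hd ltac:(apply Hp1; lra) ltac:(apply Hp1; lra)).
  replace (- / p1 b - - / p1 a) with (/ p1 a - / p1 b) in B3 by ring.
  eapply Rle_trans. apply Rabs_triang.
  eapply Rle_trans. apply Rplus_le_compat_r. apply Rabs_triang.
  rewrite Rabs_Ropp.
  replace (3 / d) with (1/d + 1/d + 1/d) by (field; lra). lra.
Qed.

Lemma mono (p1 p2 : R -> R) a b lam x y :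
  (forall z, is_derive p1 z (p2 z)) -> (forall z, a <= z <= b -> lam <= p2 z) ->
  a <= x -> x <= y -> y <= b -> p1 y - p1 x >= lam * (y - x).
Proof.
  intros D1 H2 Hax Hxy Hyb.
  destruct (Req_dec x y) as [->|Hne]. { lra. }
  destruct (MVT_gen p1 x y p2) as [c [Hc E]].
  - intros z Hz. apply D1.
  - intros z Hz. apply continuity_pt_filterlim. eapply cder. apply D1.
  - rewrite Rmin_left in Hc by lra. rewrite Rmax_right in Hc by lra.
    rewrite E. assert (lam <= p2 c) by (apply H2; lra). nra.
Qed.

Lemma sqrt_facts lam : 0 < lam -> 0 < sqrt lam /\ lam * / sqrt lam = sqrt lam.
Proof.
  intros H. assert (Hs : 0 < sqrt lam) by (apply sqrt_lt_R0; auto). split; auto.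
  rewrite <- (sqrt_sqrt lam) at 1 by lra. field. lra.
Qed.

Lemma caseA (p p1 p2 : R -> R) a b lam : a <= b -> 0 < lam ->
  (forall x, is_derive p x (p1 x)) -> (forall x, is_derive p1 x (p2 x)) ->
  (forall x, continuous p2 x) -> (forall x, a <= x <= b -> lam <= p2 x) ->
  0 <= p1 a -> Rabs (RInt (fun x => cos (p x)) a b) <= 4 / sqrt lam.
Proof.
  intros Hab Hl D0 D1 C2 H2 Ha.
  destruct (sqrt_facts lam Hl) as [Hs Hld].
  assert (Cp : forall x, continuous p x) by (intro x; eapply cder; apply D0).
  assert (Cc : forall u v, cont_on (fun x => cos (p x)) u v) by (intros u v x _; apply ccos; auto).
  assert (Hd : 0 < / sqrt lam) by (apply Rinv_0_lt_compat; auto).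
  assert (B1 : forall u v, u <= v -> v - u <= / sqrt lam -> Rabs (RInt (fun x => cos (p x)) u v) <= / sqrt lam).
  { intros u v Huv Hl'. eapply Rle_trans. apply abs_RInt_const with (M := 1); auto.
    intros x _. apply Rabs_le, COS_bound. lra. }
  destruct (Rle_dec b (a + / sqrt lam)) as [Hb|Hb].
  - eapply Rle_trans. apply B1; lra. unfold Rdiv. lra.
  - set (mm := a + / sqrt lam).
    rewrite <- (RInt_Chasles' _ a mm b) by (apply ex_on; auto; unfold mm; lra).
    eapply Rle_trans. apply Rabs_triang.
    assert (R1 := B1 a mm ltac:(unfold mm; lra) ltac:(unfold mm; lra)).
    assert (R2 : Rabs (RInt (fun x => cos (p x)) mm b) <= 3 / sqrt lam).
    { apply (vdc1 p p1 p2); auto. unfold mm; lra.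
      - intros x Hx. assert (M := mono p1 p2 a b lam a x D1 H2 ltac:(lra) ltac:(unfold mm in Hx; lra) ltac:(lra)).
        unfold mm in Hx. assert (lam * (x - a) >= lam * / sqrt lam) by (apply Rle_ge, Rmult_le_compat_l; lra). lra.
      - left. intros x Hx. assert (lam <= p2 x) by (apply H2; unfold mm in Hx; lra). lra. }
    unfold Rdiv in *. lra.
Qed.

Lemma caseB (p p1 p2 : R -> R) a b lam : a <= b -> 0 < lam ->
  (forall x, is_derive p x (p1 x)) -> (forall x, is_derive p1 x (p2 x)) ->
  (forall x, continuous p2 x) -> (forall x, a <= x <= b -> lam <= p2 x) ->
  p1 b <= 0 -> Rabs (RInt (fun x => cos (p x)) a b) <= 4 / sqrt lam.
Proof.
  intros Hab Hl D0 D1 C2 H2 Hb0.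
  destruct (sqrt_facts lam Hl) as [Hs Hld].
  assert (Cp : forall x, continuous p x) by (intro x; eapply cder; apply D0).
  assert (Cc : forall u v, cont_on (fun x => cos (p x)) u v) by (intros u v x _; apply ccos; auto).
  assert (Hd : 0 < / sqrt lam) by (apply Rinv_0_lt_compat; auto).
  assert (B1 : forall u v, u <= v -> v - u <= / sqrt lam -> Rabs (RInt (fun x => cos (p x)) u v) <= / sqrt lam).
  { intros u v Huv Hl'. eapply Rle_trans. apply abs_RInt_const with (M := 1); auto.
    intros x _. apply Rabs_le, COS_bound. lra. }
  destruct (Rle_dec a (b - / sqrt lam)) as [Hb|Hb].
  2:{ eapply Rle_trans. apply B1; lra. unfold Rdiv. lra. }
  set (mm := b - / sqrt lam).
  rewrite <- (RInt_Chasles' _ a mm b) by (apply ex_on; auto; unfold mm; lra).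
  eapply Rle_trans. apply Rabs_triang.
  assert (R1 := B1 mm b ltac:(unfold mm; lra) ltac:(unfold mm; lra)).
  assert (R2 : Rabs (RInt (fun x => cos (p x)) a mm) <= 3 / sqrt lam).
  { rewrite (RInt_ext_on (fun x => cos (p x)) (fun x => cos (- p x))) by (auto; intros; rewrite cos_neg; auto).
    apply (vdc1 (fun x => - p x) (fun x => - p1 x) (fun x => - p2 x)); auto.
    - intros x. auto_derive. eexists; eauto.
      replace (Derive (fun x0 => p x0) x) with (p1 x) by (symmetry; apply is_derive_unique; auto). ring.
    - intros x. auto_derive. eexists; eauto.
      replace (Derive (fun x0 => p1 x0) x) with (p2 x) by (symmetry; apply is_derive_unique; auto). ring.
    - intros x. apply (continuous_opp (V:=R_NormedModule) p2). auto.
    - intros x Hx. assert (M := mono p1 p2 a b lam x b D1 H2 ltac:(lra) ltac:(unfold mm in Hx; lra) ltac:(lra)).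
      unfold mm in Hx. assert (lam * (b - x) >= lam * / sqrt lam) by (apply Rle_ge, Rmult_le_compat_l; lra). lra.
    - right. intros x Hx. assert (lam <= p2 x) by (apply H2; unfold mm in Hx; lra). lra. }
  unfold Rdiv in *. lra.
Qed.

Lemma vdc2 (p p1 p2 : R -> R) a b lam : a <= b -> 0 < lam ->
  (forall x, is_derive p x (p1 x)) -> (forall x, is_derive p1 x (p2 x)) ->
  (forall x, continuous p2 x) -> (forall x, a <= x <= b -> lam <= p2 x) ->
  Rabs (RInt (fun x => cos (p x)) a b) <= 8 / sqrt lam.
Proof.
  intros Hab Hl D0 D1 C2 H2.
  destruct (sqrt_facts lam Hl) as [Hs Hld].
  assert (Cp : forall x, continuous p x) by (intro x; eapply cder; apply D0).
  assert (Cp1 : forall x, continuous p1 x) by (intro x; eapply cder; apply D1).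
  assert (Cc : forall u v, cont_on (fun x => cos (p x)) u v) by (intros u v x _; apply ccos; auto).
  assert (0 < / sqrt lam) by (apply Rinv_0_lt_compat; auto).
  destruct (Rle_dec 0 (p1 a)) as [Ha|Ha].
  { eapply Rle_trans. apply (caseA p p1 p2); auto; try lra. unfold Rdiv; lra. }
  destruct (Rle_dec (p1 b) 0) as [Hb|Hb].
  { eapply Rle_trans. apply (caseB p p1 p2); auto; try lra. unfold Rdiv; lra. }
  destruct (IVT_gen_consistent p1 a b 0 Cp1) as [c [Hc Ec]].
  { rewrite Rmin_left, Rmax_right; lra. }
  rewrite Rmin_left, Rmax_right in Hc by lra.
  rewrite <- (RInt_Chasles' _ a c b) by (apply ex_on; auto; lra).
  eapply Rle_trans. apply Rabs_triang.
  assert (R1 : Rabs (RInt (fun x => cos (p x)) a c) <= 4 / sqrt lam).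
  { apply (caseB p p1 p2); auto; try lra. intros; apply H2; lra. }
  assert (R2 : Rabs (RInt (fun x => cos (p x)) c b) <= 4 / sqrt lam).
  { apply (caseA p p1 p2); auto; try lra. intros; apply H2; lra. }
  unfold Rdiv in *; lra.
Qed.

Lemma prod_rule (u v du dv : R -> R) x : is_derive u x (du x) -> is_derive v x (dv x) ->
  is_derive (fun y => u y * v y) x (du x * v x + u x * dv x).
Proof.
  intros Hu Hv. auto_derive. split; [eexists; eauto|split; [eexists; eauto|auto]].
  replace (Derive (fun x0 => u x0) x) with (du x) by (symmetry; apply is_derive_unique; auto).
  replace (Derive (fun x0 => v x0) x) with (dv x) by (symmetry; apply is_derive_unique; auto). ring.
Qed.

Lemma RInt_deriv f a x : (forall y, continuous f y) -> is_derive (fun z => RInt f a z) x (f x).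
Proof.
  intros Hf. apply (is_derive_RInt (V:=R_CompleteNormedModule) f (fun z => RInt f a z) a x).
  - apply filter_forall. intros y. apply (RInt_correct (V:=R_CompleteNormedModule)).
    apply (ex_RInt_continuous (V:=R_CompleteNormedModule)). intros; apply Hf.
  - apply Hf.
Qed.

Lemma RInt_pt f a : RInt f a a = 0.
Proof. apply (RInt_point (V:=R_CompleteNormedModule)). Qed.

Lemma vdc_amp (p p1 p2 g g1 : R -> R) a b lam B0 V : a <= b -> 0 < lam ->
  (forall x, is_derive p x (p1 x)) -> (forall x, is_derive p1 x (p2 x)) ->
  (forall x, continuous p2 x) -> (forall x, a <= x <= b -> lam <= p2 x) ->
  (forall x, is_derive g x (g1 x)) -> (forall x, continuous g1 x) ->
  Rabs (g b) <= B0 -> RInt (fun x => Rabs (g1 x)) a b <= V ->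
  Rabs (RInt (fun x => cos (p x) * g x) a b) <= 8 / sqrt lam * (B0 + V).
Proof.
  intros Hab Hl D0 D1 C2 H2 Dg Cg1 HB HV.
  destruct (sqrt_facts lam Hl) as [Hs Hld].
  set (K := 8 / sqrt lam).
  assert (HK : 0 <= K) by (unfold K, Rdiv; assert (0 < / sqrt lam) by (apply Rinv_0_lt_compat; auto); lra).
  assert (Cp : forall x, continuous p x) by (intro x; eapply cder; apply D0).
  assert (Cg : forall x, continuous g x) by (intro x; eapply cder; apply Dg).
  assert (Cc : forall x, continuous (fun y => cos (p y)) x) by (intros x; apply ccos; auto).
  set (Gc := fun z : R => (RInt (fun y => cos (p y)) a z : R)).
  assert (DG : forall x, is_derive Gc x (cos (p x))) by (intros x; apply (RInt_deriv (fun y => cos (p y))); auto).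
  assert (CG : forall x, continuous Gc x) by (intro x; apply (cder Gc (fun y => cos (p y)) x (DG x))).
  assert (HG : forall x, a <= x <= b -> Rabs (Gc x) <= K).
  { intros x Hx. unfold Gc, K. apply (vdc2 p p1 p2); auto; try lra. intros; apply H2; lra. }
  assert (E : RInt (fun x => cos (p x) * g x + Gc x * g1 x) a b = Gc b * g b - Gc a * g a).
  { apply (FTC (fun x => Gc x * g x)); auto.
    - intros x _. apply (prod_rule Gc g (fun y => cos (p y)) g1); auto.
    - intros x _. apply cplus; apply cmul; auto. }
  assert (Ga : Gc a = 0) by (unfold Gc; apply RInt_pt).
  rewrite RInt_plus' in E by (apply ex_on; auto; apply cont_on_glob; intros; apply cmul; auto).
  rewrite Ga in E.
  assert (B1 : Rabs (RInt (fun x => Gc x * g1 x) a b) <= K * V).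
  { eapply Rle_trans. apply abs_RInt_maj with (m := fun x => K * Rabs (g1 x)); auto.
    - apply cont_on_glob; intros; apply cmul; auto.
    - apply cont_on_glob; intros; apply cmul. apply continuous_const. apply cabs; auto.
    - intros x Hx. rewrite Rabs_mult. apply Rmult_le_compat_r. apply Rabs_pos. auto.
    - rewrite RInt_scal'. apply Rmult_le_compat_l; auto. apply ex_on; auto.
      apply cont_on_glob; intros; apply cabs; auto. }
  assert (B2 : Rabs (Gc b * g b) <= K * B0).
  { rewrite Rabs_mult. apply Rmult_le_compat; auto using Rabs_pos. apply HG; lra. }
  replace (RInt (fun x => cos (p x) * g x) a b) with (Gc b * g b - RInt (fun x => Gc x * g1 x) a b) by lra.
  eapply Rle_trans. apply Rabs_triang. rewrite Rabs_Ropp. lra.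
Qed.

Lemma exists_nat_gt x : exists n : nat, x < INR n.
Proof.
  destruct (Rle_or_lt x 0) as [H|H].
  - exists 1%nat. simpl. lra.
  - destruct (nfloor_ex x (Rlt_le _ _ H)) as [n Hn]. exists (S n). rewrite S_INR. lra.
Qed.

Lemma rate_bound (x B c b0 : R) : 0 < b0 -> (forall b, b0 <= b -> x <= B + c / b) -> x <= B.
Proof.
  intros Hb0 H. destruct (Rle_or_lt x B) as [|Hx]; auto. exfalso.
  set (b := Rmax b0 (Rabs c / (x - B) + 1)).
  assert (Hb : b0 <= b) by apply Rmax_l.
  assert (Hb2 : Rabs c / (x - B) + 1 <= b) by apply Rmax_r.
  assert (Hbp : 0 < b) by lra.
  specialize (H b Hb).
  assert (Hc : Rabs c / (x - B) * (x - B) = Rabs c) by (field; lra).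
  assert (0 <= Rabs c / (x - B)) by (unfold Rdiv; apply Rmult_le_pos; [apply Rabs_pos| apply Rlt_le, Rinv_0_lt_compat; lra]).
  assert (Hlt : Rabs c < b * (x - B)) by nra.
  assert (c / b < x - B).
  { apply (Rmult_lt_reg_r b); auto. unfold Rdiv. rewrite Rmult_assoc, Rinv_l by lra.
    assert (c <= Rabs c) by apply Rle_abs. nra. }
  lra.
Qed.

Lemma tail_lim (H : R -> R) K : (forall x, continuous H x) ->
  (forall x, 1 <= x -> Rabs (H x) <= K / x ^ 2) ->
  exists L, forall x, 1 <= x -> Rabs (RInt H 0 x - L) <= K / x.
Proof.
  intros CH HK.
  assert (K0 : 0 <= K) by (specialize (HK 1 (Rle_refl 1)); replace (1 ^ 2) with 1 in HK by ring;
    unfold Rdiv in HK; rewrite Rinv_1, Rmult_1_r in HK; assert (0 <= Rabs (H 1)) by apply Rabs_pos; lra).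
  assert (tail : forall x y, 1 <= x -> x <= y -> Rabs (RInt H x y) <= K / x).
  { intros x y Hx Hxy.
    eapply Rle_trans. apply abs_RInt_maj with (m := fun z => K * / (z ^ 2)); auto.
    - apply cont_on_glob; auto.
    - intros z Hz. apply cmul. apply continuous_const. apply cinv.
      apply cex. auto_derive. auto. assert (0 < z ^ 2) by (apply pow_lt; lra). lra.
    - intros z Hz. apply HK. lra.
    - rewrite (FTC (fun z => - K * / z)); auto.
      + unfold Rdiv.
        assert (0 <= K * / y) by (apply Rmult_le_pos; [lra| apply Rlt_le, Rinv_0_lt_compat; lra]). lra.
      + intros z Hz. auto_derive. lra. field. lra.
      + intros z Hz. apply cmul. apply continuous_const. apply cinv.
        apply cex. auto_derive. auto. assert (0 < z ^ 2) by (apply pow_lt; lra). lra. }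
  assert (exR : forall u v, ex_RInt H u v) by (intros; apply (ex_RInt_continuous (V:=R_CompleteNormedModule)); intros; apply CH).
  assert (diff : forall x y, 1 <= x -> x <= y -> Rabs (RInt H 0 y - RInt H 0 x) <= K / x).
  { intros x y Hx Hxy. assert (Ech := RInt_Chasles' H 0 x y (exR _ _) (exR _ _)).
    replace (RInt H 0 y - RInt H 0 x) with (RInt H x y) by lra. auto. }
  set (u := fun n : nat => RInt H 0 (INR n + 1)).
  assert (Cu : ex_lim_seq_cauchy u).
  { intros eps. destruct (exists_nat_gt (K / eps)) as [N HN].
    exists N. intros n k Hn Hk.
    assert (HNe : K / (INR N + 1) < eps).
    { assert (0 < eps) by apply cond_pos. assert (0 <= INR N) by apply pos_INR.
      apply (Rmult_lt_reg_r (INR N + 1)); [lra|]. unfold Rdiv. rewrite Rmult_assoc, Rinv_l by lra.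
      assert (K / eps * eps = K) by (field; lra). nra. }
    assert (Hn' : INR N <= INR n) by (apply le_INR; auto).
    assert (Hk' : INR N <= INR k) by (apply le_INR; auto).
    assert (0 <= INR N) by apply pos_INR.
    assert (KN : forall z, INR N + 1 <= z -> K / z <= K / (INR N + 1)).
    { intros z Hz. unfold Rdiv. apply Rmult_le_compat_l; auto. apply Rinv_le_contravar; lra. }
    unfold u. destruct (Rle_or_lt (INR n) (INR k)).
    - rewrite <- Rabs_Ropp. replace (- (RInt H 0 (INR n + 1) - RInt H 0 (INR k + 1))) with
        (RInt H 0 (INR k + 1) - RInt H 0 (INR n + 1)) by ring.
      eapply Rle_lt_trans. apply diff; lra. eapply Rle_lt_trans. apply KN; lra. auto.
    - eapply Rle_lt_trans. apply diff; lra. eapply Rle_lt_trans. apply KN; lra. auto. }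
  apply ex_lim_seq_cauchy_corr in Cu. destruct Cu as [L HL].
  exists L. intros x Hx.
  apply is_lim_seq_spec in HL.
  destruct (Rle_or_lt (Rabs (RInt H 0 x - L)) (K / x)) as [|Hc]; auto. exfalso.
  assert (Heps : 0 < Rabs (RInt H 0 x - L) - K / x) by lra.
  destruct (HL (mkposreal _ Heps)) as [N HN].
  destruct (exists_nat_gt x) as [n1 Hn1].
  set (n := max N n1).
  assert (HnN : (N <= n)%nat) by apply Nat.le_max_l.
  assert (Hn1' : INR n1 <= INR n) by (apply le_INR, Nat.le_max_r).
  specialize (HN n HnN). simpl in HN.
  assert (D := diff x (INR n + 1) Hx ltac:(lra)).
  assert (Rabs (RInt H 0 x - L) <= Rabs (RInt H 0 (INR n + 1) - RInt H 0 x) + Rabs (u n - L)).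
  { unfold u. rewrite <- (Rabs_Ropp (RInt H 0 (INR n + 1) - RInt H 0 x)).
    eapply Rle_trans; [|apply Rabs_triang]. right. f_equal. ring. }
  lra.
Qed.

Definition ff (t r th e : R) := cos (t * (e ^ 4 + e ^ 2) + th) * e * sin (e * r).
Definition HH (t r th e : R) := sin (t * (e ^ 4 + e ^ 2) + th) *
  (r * cos (e * r) / (4 * e ^ 2 + 2) - 8 * e * sin (e * r) / (4 * e ^ 2 + 2) ^ 2).
Definition bd (t r th e : R) := sin (t * (e ^ 4 + e ^ 2) + th) * sin (e * r) / (t * (4 * e ^ 2 + 2)).

Lemma D_pos e : 0 < 4 * e ^ 2 + 2.
Proof. nra. Qed.

Lemma ff_cont t r th x : continuous (ff t r th) x.
Proof. apply cex. unfold ff. auto_derive. auto. Qed.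
Lemma HH_cont t r th x : continuous (HH t r th) x.
Proof. apply cex. unfold HH. auto_derive. assert (H := D_pos x). repeat split; nra. Qed.

Lemma ibp t r th a b : t <> 0 -> a <= b ->
  RInt (ff t r th) a b = bd t r th b - bd t r th a - / t * RInt (HH t r th) a b.
Proof.
  intros Ht Hab.
  assert (E := FTC (bd t r th) (fun e => ff t r th e + / t * HH t r th e) a b Hab).
  assert (E1 : RInt (fun e => ff t r th e + / t * HH t r th e) a b = bd t r th b - bd t r th a).
  { apply E.
    + intros e _. unfold bd, ff, HH. assert (H := D_pos e). auto_derive.
      repeat split; try nra.
      simpl. field. split; nra.
    + apply cont_on_glob. intros; apply cplus. apply ff_cont. apply cmul. apply continuous_const. apply HH_cont. }
  assert (X1 : ex_RInt (ff t r th) a b) by (apply ex_on; auto; apply cont_on_glob; apply ff_cont).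
  assert (X2 : ex_RInt (HH t r th) a b) by (apply ex_on; auto; apply cont_on_glob; apply HH_cont).
  assert (X3 : ex_RInt (fun e => / t * HH t r th e) a b).
  { apply ex_on; auto; apply cont_on_glob; intros; apply cmul. apply continuous_const. apply HH_cont. }
  rewrite RInt_plus' in E1 by auto. rewrite RInt_scal' in E1 by auto. lra.
Qed.

Lemma sin_abs_le x : Rabs (sin x) <= Rabs x.
Proof.
  destruct (MVT_gen sin 0 x cos) as [c [_ E]].
  - intros. apply is_derive_sin.
  - intros. apply continuity_pt_filterlim. apply csin. apply continuous_id.
  - rewrite sin_0 in E. replace (sin x) with (cos c * (x - 0)) by lra.
    rewrite Rabs_mult. replace (x - 0) with x by ring.
    assert (Rabs (cos c) <= 1) by (apply Rabs_le, COS_bound).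
    assert (0 <= Rabs x) by apply Rabs_pos. nra.
Qed.

Lemma abs_div_le (num den N d : R) : Rabs num <= N -> 0 < d -> d <= den ->
  Rabs (num / den) <= N / d.
Proof.
  intros Hn Hd Hden. unfold Rdiv. rewrite Rabs_mult, Rabs_inv, (Rabs_right den) by lra.
  assert (0 <= Rabs num) by apply Rabs_pos.
  assert (/ den <= / d) by (apply Rinv_le_contravar; lra).
  assert (0 < / den) by (apply Rinv_0_lt_compat; lra).
  apply Rmult_le_compat; lra.
Qed.

Lemma HH_bound t r th e : 0 < e -> 0 < r -> Rabs (HH t r th e) <= (3 * r / 4) / e ^ 2.
Proof.
  intros He Hr. unfold HH. rewrite Rabs_mult.
  assert (S1 : Rabs (sin (t * (e ^ 4 + e ^ 2) + th)) <= 1) by (apply Rabs_le, SIN_bound).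
  assert (Hs : Rabs (sin (e * r)) <= e * r).
  { eapply Rle_trans. apply sin_abs_le. rewrite Rabs_right. lra. nra. }
  assert (P1 : Rabs (r * cos (e * r) / (4 * e ^ 2 + 2)) <= r / (4 * e ^ 2)).
  { apply abs_div_le; try nra. rewrite Rabs_mult, (Rabs_right r) by lra.
    assert (Rabs (cos (e * r)) <= 1) by (apply Rabs_le, COS_bound). nra. }
  assert (P2 : Rabs (8 * e * sin (e * r) / (4 * e ^ 2 + 2) ^ 2) <= (8 * e * (e * r)) / (16 * e ^ 4)).
  { apply abs_div_le; try nra. rewrite Rabs_mult, (Rabs_right (8 * e)) by lra. nra.
    assert (0 < e ^ 2) by nra. nra. }
  assert (E1 : r / (4 * e ^ 2) + (8 * e * (e * r)) / (16 * e ^ 4) = (3 * r / 4) / e ^ 2) by (field; lra).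
  assert (T : Rabs (r * cos (e * r) / (4 * e ^ 2 + 2) - 8 * e * sin (e * r) / (4 * e ^ 2 + 2) ^ 2) <= (3 * r / 4) / e ^ 2).
  { eapply Rle_trans. apply Rabs_triang. rewrite Rabs_Ropp. lra. }
  eapply Rle_trans. apply Rmult_le_compat_r. apply Rabs_pos. exact S1. lra.
Qed.

Lemma ff_bound t r th e : 0 <= e -> 0 < r -> Rabs (ff t r th e) <= r * e ^ 2.
Proof.
  intros He Hr. unfold ff. rewrite !Rabs_mult, (Rabs_right e) by lra.
  assert (Rabs (cos (t * (e ^ 4 + e ^ 2) + th)) <= 1) by (apply Rabs_le, COS_bound).
  assert (Hs : Rabs (sin (e * r)) <= e * r).
  { eapply Rle_trans. apply sin_abs_le. rewrite Rabs_right. lra. nra. }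
  assert (0 <= Rabs (sin (e * r))) by apply Rabs_pos.
  assert (0 <= Rabs (cos (t * (e ^ 4 + e ^ 2) + th))) by apply Rabs_pos.
  assert (e * Rabs (sin (e * r)) <= e * (e * r)) by (apply Rmult_le_compat_l; lra).
  assert (0 <= e * Rabs (sin (e * r))) by nra.
  replace (Rabs (cos (t * (e ^ 4 + e ^ 2) + th)) * e * Rabs (sin (e * r))) with
    (Rabs (cos (t * (e ^ 4 + e ^ 2) + th)) * (e * Rabs (sin (e * r)))) by ring.
  nra.
Qed.

Lemma bd_bound1 t r th b : 0 < t -> 1 <= b -> Rabs (bd t r th b) <= (/ t) / b.
Proof.
  intros Ht Hb. unfold bd. replace ((/ t) / b) with (1 / (t * b)) by (field; lra). apply abs_div_le.
  - rewrite Rabs_mult. assert (Rabs (sin (t * (b ^ 4 + b ^ 2) + th)) <= 1) by (apply Rabs_le, SIN_bound).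
    assert (Rabs (sin (b * r)) <= 1) by (apply Rabs_le, SIN_bound).
    assert (0 <= Rabs (sin (b * r))) by apply Rabs_pos.
    assert (0 <= Rabs (sin (t * (b ^ 4 + b ^ 2) + th))) by apply Rabs_pos. nra.
  - nra.
  - apply Rmult_le_compat_l; nra.
Qed.

Lemma bd_bound2 t r th e : 0 < t -> 0 < e -> 0 < r -> Rabs (bd t r th e) <= r / (4 * t * e).
Proof.
  intros Ht He Hr. unfold bd.
  replace (r / (4 * t * e)) with ((e * r) / (t * (4 * e ^ 2))) by (field; lra).
  apply abs_div_le.
  - rewrite Rabs_mult. assert (Rabs (sin (t * (e ^ 4 + e ^ 2) + th)) <= 1) by (apply Rabs_le, SIN_bound).
    assert (Hs : Rabs (sin (e * r)) <= e * r).
    { eapply Rle_trans. apply sin_abs_le. rewrite Rabs_right. lra. nra. }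
    assert (0 <= Rabs (sin (t * (e ^ 4 + e ^ 2) + th))) by apply Rabs_pos.
    assert (0 <= Rabs (sin (e * r))) by apply Rabs_pos. nra.
  - assert (0 < e ^ 2) by nra. nra.
  - assert (0 < e ^ 2) by nra. nra.
Qed.

Lemma bd_0 t r th : bd t r th 0 = 0.
Proof. unfold bd. replace (0 * r) with 0 by ring. rewrite sin_0. unfold Rdiv. ring. Qed.

Lemma int_inv_sq K x y : 0 <= K -> 0 < x -> x <= y -> RInt (fun z => K / z ^ 2) x y <= K / x.
Proof.
  intros HK Hx Hxy.
  rewrite (FTC (fun z => - K / z)); auto.
  - unfold Rdiv. assert (0 <= K * / y) by (apply Rmult_le_pos; [lra| apply Rlt_le, Rinv_0_lt_compat; lra]). lra.
  - intros z Hz. auto_derive. lra. field. lra.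
  - intros z Hz. apply cex. auto_derive. assert (0 < z ^ 2) by (apply pow_lt; lra). simpl in *. lra.
Qed.

Lemma int_sq r x : 0 <= x -> @eq R (RInt (fun z => r * z ^ 2) 0 x) (r * x ^ 3 / 3).
Proof.
  intros Hx. rewrite (FTC (fun z => r * z ^ 3 / 3)); auto.
  - field.
  - intros z _. auto_derive. auto. field.
  - apply cont_on_glob. intros z. apply cex. auto_derive. auto.
Qed.

Definition Pph (t s0 c0 e : R) := t * (e ^ 4 + e ^ 2) + s0 * e + c0.
Definition gg (e : R) := / (4 * e ^ 2 + 2).
Definition gg1 (e : R) := - (8 * e) / (4 * e ^ 2 + 2) ^ 2.
Definition hh (r e : R) := 8 * e * sin (e * r) / (4 * e ^ 2 + 2) ^ 2.
Definition hh1 (r e : R) := 8 * (sin (e * r) * (2 - 12 * e ^ 2) + e * r * cos (e * r) * (4 * e ^ 2 + 2)) / (4 * e ^ 2 + 2) ^ 3.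

Lemma cos_m_PI2 y : cos (y - PI / 2) = sin y.
Proof. rewrite cos_minus, cos_PI2, sin_PI2. ring. Qed.

Lemma HH_decomp t r th e : HH t r th e =
  r / 2 * (cos (Pph t r (th - PI / 2) e) * gg e + cos (Pph t (- r) (th - PI / 2) e) * gg e)
  - cos (Pph t 0 (th - PI / 2) e) * hh r e.
Proof.
  set (A := t * (e ^ 4 + e ^ 2) + th).
  replace (Pph t r (th - PI / 2) e) with ((A + e * r) - PI / 2) by (unfold Pph, A; ring).
  replace (Pph t (- r) (th - PI / 2) e) with ((A - e * r) - PI / 2) by (unfold Pph, A; ring).
  replace (Pph t 0 (th - PI / 2) e) with (A - PI / 2) by (unfold Pph, A; ring).
  rewrite !cos_m_PI2, sin_plus, sin_minus. unfold HH, gg, hh. fold A.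
  assert (H := D_pos e). field. lra.
Qed.

Lemma vdc_P (t s0 c0 : R) (g g1 : R -> R) b B0 V : 0 < t -> 0 <= b ->
  (forall x, is_derive g x (g1 x)) -> (forall x, continuous g1 x) ->
  Rabs (g b) <= B0 -> RInt (fun x => Rabs (g1 x)) 0 b <= V ->
  Rabs (RInt (fun e => cos (Pph t s0 c0 e) * g e) 0 b) <= 8 / sqrt (2 * t) * (B0 + V).
Proof.
  intros Ht Hb Dg Cg HB HV.
  apply (vdc_amp (Pph t s0 c0) (fun e => t * (4 * e ^ 3 + 2 * e) + s0) (fun e => t * (12 * e ^ 2 + 2)) g g1); auto; try lra.
  - intros x. unfold Pph. auto_derive. auto. ring.
  - intros x. auto_derive. auto. ring.
  - intros x. apply cex. auto_derive. auto.
  - intros x _. nra.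
Qed.

Lemma gg_der e : is_derive gg e (gg1 e).
Proof. unfold gg, gg1. assert (H := D_pos e). auto_derive. lra. field. lra. Qed.
Lemma gg1_cont e : continuous gg1 e.
Proof. apply cex. unfold gg1. assert (H := D_pos e). auto_derive. nra. Qed.
Lemma gg_b b : Rabs (gg b) <= 1 / 2.
Proof. unfold gg. assert (H := D_pos b). rewrite Rabs_right.
  unfold Rdiv. rewrite Rmult_1_l. apply Rinv_le_contravar; nra.
  apply Rle_ge, Rlt_le, Rinv_0_lt_compat; lra. Qed.
Lemma gg_V b : 0 <= b -> RInt (fun x => Rabs (gg1 x)) 0 b <= 1 / 2.
Proof.
  intros Hb. eapply Rle_trans. apply RInt_le' with (g := fun e => 8 * e / (4 * e ^ 2 + 2) ^ 2); auto.
  - apply cont_on_glob; intros; apply cabs, gg1_cont.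
  - apply cont_on_glob; intros x; apply cex. assert (H := D_pos x). auto_derive. nra.
  - intros x Hx. unfold gg1. apply Rle_trans with ((8 * x) / (4 * x ^ 2 + 2) ^ 2). 
    replace ((8 * x) / (4 * x ^ 2 + 2) ^ 2) with ((8 * x) / (4 * x ^ 2 + 2) ^ 2) by auto.
    assert (H := D_pos x).
    apply abs_div_le. rewrite Rabs_Ropp, Rabs_right; lra. nra. lra. lra.
  - rewrite (FTC (fun e => - / (4 * e ^ 2 + 2))); auto.
    + assert (H := D_pos b). assert (0 < / (4 * b ^ 2 + 2)) by (apply Rinv_0_lt_compat; lra).
      replace (4 * 0 ^ 2 + 2) with 2 by ring. lra.
    + intros x _. assert (H := D_pos x). auto_derive. lra. field. lra.
    + apply cont_on_glob; intros x; apply cex. assert (H := D_pos x). auto_derive. nra.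
Qed.

Lemma hh_der r e : is_derive (hh r) e (hh1 r e).
Proof. unfold hh, hh1. assert (H := D_pos e). auto_derive. nra. field. lra. Qed.
Lemma hh1_cont r e : continuous (hh1 r) e.
Proof. apply cex. unfold hh1. assert (H := D_pos e). auto_derive. nra. Qed.
Lemma sin_le_er e r : 0 <= e -> 0 < r -> Rabs (sin (e * r)) <= e * r.
Proof. intros. eapply Rle_trans. apply sin_abs_le. rewrite Rabs_right. lra. nra. Qed.
Lemma div_le_of (a0 d c1 : R) : 0 < d -> a0 <= c1 * d -> a0 / d <= c1.
Proof. intros Hd H. apply (Rmult_le_reg_r d); auto. unfold Rdiv. rewrite Rmult_assoc, Rinv_l by lra. lra. Qed.

Lemma hh_b r b : 0 <= b -> 0 < r -> Rabs (hh r b) <= r / 2.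
Proof.
  intros Hb Hr. unfold hh. assert (H := D_pos b).
  assert (HD : 0 < (4 * b ^ 2 + 2) ^ 2) by nra.
  eapply Rle_trans. apply abs_div_le with (N := 8 * b * (b * r)) (d := (4 * b ^ 2 + 2) ^ 2); auto; try lra.
  - rewrite Rabs_mult, (Rabs_right (8 * b)) by lra. apply Rmult_le_compat_l. lra. apply sin_le_er; auto.
  - apply div_le_of; auto. assert (0 <= b ^ 2) by nra. nra.
Qed.

Lemma hh1_bound r e : 0 <= e -> 0 < r -> Rabs (hh1 r e) <= 32 * r * e / (4 * e ^ 2 + 2) ^ 2.
Proof.
  intros He Hr. unfold hh1. assert (H := D_pos e).
  replace (32 * r * e / (4 * e ^ 2 + 2) ^ 2) with ((8 * (4 * (e * r) * (4 * e ^ 2 + 2))) / (4 * e ^ 2 + 2) ^ 3) by (field; lra).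
  apply abs_div_le; try nra.
  rewrite Rabs_mult, (Rabs_right 8) by lra. apply Rmult_le_compat_l. lra.
  eapply Rle_trans. apply Rabs_triang.
  rewrite !Rabs_mult. rewrite (Rabs_right (4 * e ^ 2 + 2)) by lra.
  rewrite (Rabs_right e), (Rabs_right r) by lra.
  assert (S := sin_le_er e r He Hr).
  assert (A2 : Rabs (2 - 12 * e ^ 2) <= 3 * (4 * e ^ 2 + 2)) by (apply Rabs_le; nra).
  assert (Cc : Rabs (cos (e * r)) <= 1) by (apply Rabs_le, COS_bound).
  assert (0 <= Rabs (sin (e * r))) by apply Rabs_pos.
  assert (0 <= Rabs (2 - 12 * e ^ 2)) by apply Rabs_pos.
  assert (0 <= Rabs (cos (e * r))) by apply Rabs_pos.
  assert (0 <= e * r) by nra.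
  assert (Rabs (sin (e * r)) * Rabs (2 - 12 * e ^ 2) <= (e * r) * (3 * (4 * e ^ 2 + 2))) by (apply Rmult_le_compat; auto).
  assert (e * r * Rabs (cos (e * r)) * (4 * e ^ 2 + 2) <= e * r * 1 * (4 * e ^ 2 + 2)).
  { apply Rmult_le_compat_r. lra. apply Rmult_le_compat_l; auto. }
  nra.
Qed.

Lemma hh_V r b : 0 <= b -> 0 < r -> RInt (fun x => Rabs (hh1 r x)) 0 b <= 2 * r.
Proof.
  intros Hb Hr. eapply Rle_trans. apply RInt_le' with (g := fun e => 32 * r * e / (4 * e ^ 2 + 2) ^ 2); auto.
  - apply cont_on_glob; intros; apply cabs, hh1_cont.
  - apply cont_on_glob; intros x; apply cex. assert (H := D_pos x). auto_derive. nra.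
  - intros x Hx. apply hh1_bound; lra.
  - rewrite (FTC (fun e => - 4 * r / (4 * e ^ 2 + 2))); auto.
    + assert (H := D_pos b). assert (0 < 4 * r / (4 * b ^ 2 + 2)) by (apply Rdiv_lt_0_compat; lra).
      replace (4 * 0 ^ 2 + 2) with 2 by ring. unfold Rdiv in *. lra.
    + intros x _. assert (H := D_pos x). auto_derive. lra. field. lra.
    + apply cont_on_glob; intros x; apply cex. assert (H := D_pos x). auto_derive. nra.
Qed.

Lemma G_bound t r th b : 0 < t -> 0 < r -> 0 <= b ->
  Rabs (RInt (HH t r th) 0 b) <= 28 * r / sqrt (2 * t).
Proof.
  intros Ht Hr Hb.
  set (c0 := th - PI / 2).
  set (f1 := fun e => cos (Pph t r c0 e) * gg e).
  set (f2 := fun e => cos (Pph t (- r) c0 e) * gg e).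
  set (f3 := fun e => cos (Pph t 0 c0 e) * hh r e).
  assert (Cf : forall (s0 : R) (k : R -> R), (forall x, continuous k x) -> forall x, continuous (fun e => cos (Pph t s0 c0 e) * k e) x).
  { intros s0 k Hk x. apply cmul; auto. apply ccos. apply cex. unfold Pph. auto_derive. auto. }
  assert (Cg : forall x, continuous gg x) by (intro x; apply (cder gg gg1), gg_der).
  assert (Ch : forall x, continuous (hh r) x) by (intro x; apply (cder (hh r) (hh1 r)), hh_der).
  assert (X1 : ex_RInt f1 0 b) by (apply ex_on; auto; apply cont_on_glob; apply Cf; auto).
  assert (X2 : ex_RInt f2 0 b) by (apply ex_on; auto; apply cont_on_glob; apply Cf; auto).
  assert (X3 : ex_RInt f3 0 b) by (apply ex_on; auto; apply cont_on_glob; apply Cf; auto).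
  assert (X12 : ex_RInt (fun e => f1 e + f2 e) 0 b) by (apply ex_on; auto; apply cont_on_glob; intros; apply cplus; apply Cf; auto).
  assert (X12' : ex_RInt (fun e => r / 2 * (f1 e + f2 e)) 0 b).
  { apply ex_on; auto; apply cont_on_glob; intros; apply cmul. apply continuous_const. apply cplus; apply Cf; auto. }
  assert (E : RInt (HH t r th) 0 b = RInt (fun e => r / 2 * (f1 e + f2 e) - f3 e) 0 b).
  { apply RInt_ext_on; auto. intros x _. rewrite HH_decomp. unfold f1, f2, f3, c0. ring. }
  rewrite E, RInt_minus', RInt_scal', RInt_plus' by auto.
  set (K := 8 / sqrt (2 * t)).
  assert (HK : 0 <= K).
  { unfold K. apply Rlt_le, Rdiv_lt_0_compat. lra. apply sqrt_lt_R0. lra. }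
  assert (B1 : Rabs (RInt f1 0 b) <= K * (1/2 + 1/2)).
  { apply vdc_P with (g1 := gg1); auto. apply gg_der. apply gg1_cont. apply gg_b. apply gg_V; auto. }
  assert (B2 : Rabs (RInt f2 0 b) <= K * (1/2 + 1/2)).
  { apply vdc_P with (g1 := gg1); auto. apply gg_der. apply gg1_cont. apply gg_b. apply gg_V; auto. }
  assert (B3 : Rabs (RInt f3 0 b) <= K * (r/2 + 2 * r)).
  { apply vdc_P with (g1 := hh1 r); auto. apply hh_der. apply hh1_cont. apply hh_b; auto. apply hh_V; auto. }
  eapply Rle_trans. apply Rabs_triang. rewrite Rabs_Ropp, Rabs_mult, (Rabs_right (r / 2)) by lra.
  assert (Rabs (RInt f1 0 b + RInt f2 0 b) <= 2 * K) by (eapply Rle_trans; [apply Rabs_triang|lra]).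
  replace (28 * r / sqrt (2 * t)) with (7 / 2 * r * K) by (unfold K; field; apply Rgt_not_eq, sqrt_lt_R0; lra).
  nra.
Qed.

Lemma theta_main t r th : 0 < t -> 0 < r ->
  exists L c0, (forall b, 1 <= b -> Rabs (RInt (ff t r th) 0 b - L) <= c0 / b) /\
    (1 < t -> Rabs L <= 28 * r / sqrt (2 * t) / t) /\
    (forall e0, 0 < e0 -> e0 ^ 4 * t = 1 -> Rabs L <= 2 * r * e0 ^ 3).
Proof.
  intros Ht Hr.
  destruct (tail_lim (HH t r th) (3 * r / 4) (HH_cont t r th)) as [LG HLG].
  { intros x Hx. apply HH_bound; lra. }
  assert (Hit : 0 < / t) by (apply Rinv_0_lt_compat; lra).
  set (G := fun b => (RInt (HH t r th) 0 b : R)).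
  exists (- / t * LG), (/ t + / t * (3 * r / 4)).
  assert (Rep : forall b, 0 <= b -> @eq R (RInt (ff t r th) 0 b) (bd t r th b - / t * G b)).
  { intros b Hb. rewrite ibp by lra. rewrite bd_0. unfold G. ring. }
  assert (Rate : forall b, 1 <= b -> Rabs (RInt (ff t r th) 0 b - - / t * LG) <= (/ t + / t * (3 * r / 4)) / b).
  { intros b Hb. rewrite Rep by lra.
    replace (bd t r th b - / t * G b - - / t * LG) with (bd t r th b + - (/ t * (G b - LG))) by ring.
    eapply Rle_trans. apply Rabs_triang. rewrite Rabs_Ropp, Rabs_mult, (Rabs_right (/ t)) by lra.
    assert (B1 := bd_bound1 t r th b Ht Hb).
    assert (B2 := HLG b Hb). fold G in B2.
    assert (/ t * Rabs (G b - LG) <= / t * (3 * r / 4 / b)) by (apply Rmult_le_compat_l; [lra| unfold G; exact B2]).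
    replace ((/ t + / t * (3 * r / 4)) / b) with (/ t / b + / t * (3 * r / 4 / b)) by fld. lra. }
  split; [exact Rate|split].
  - intros Ht1.
    assert (BL : Rabs LG <= 28 * r / sqrt (2 * t)).
    { apply (rate_bound _ _ (3 * r / 4) 1); [lra|]. intros b Hb.
      assert (B1 := G_bound t r th b Ht Hr ltac:(lra)).
      assert (B2 := HLG b Hb).
      assert (Rabs LG <= Rabs (RInt (HH t r th) 0 b) + Rabs (RInt (HH t r th) 0 b - LG)).
      { rewrite <- (Rabs_Ropp (RInt (HH t r th) 0 b - LG)). eapply Rle_trans; [|apply Rabs_triang]. right. f_equal. ring. }
      lra. }
    rewrite Rabs_mult, Rabs_Ropp, (Rabs_right (/ t)) by lra.
    unfold Rdiv at 2. rewrite Rmult_comm. apply Rmult_le_compat_r; lra.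
  - intros e0 He0 Ee.
    assert (Eit : / t = e0 ^ 4) by (field_simplify_eq; [nra| lra]).
    assert (He3 : 0 < e0 ^ 3) by (apply pow_lt; lra).
    apply (rate_bound _ _ (/ t + (/ t + / t * (3 * r / 4))) (Rmax 1 e0)).
    { assert (1 <= Rmax 1 e0) by apply Rmax_l. lra. }
    intros b Hb. assert (Hb1 : 1 <= b) by (eapply Rle_trans; [apply Rmax_l|exact Hb]).
    assert (Hbe : e0 <= b) by (eapply Rle_trans; [apply Rmax_r|exact Hb]).
    assert (XF : forall u v, ex_RInt (ff t r th) u v) by (intros; apply (ex_RInt_continuous (V:=R_CompleteNormedModule)); intros; apply ff_cont).
    assert (Ech := RInt_Chasles' (ff t r th) 0 e0 b (XF _ _) (XF _ _)).
    rewrite (ibp t r th e0 b) in Ech by lra.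
    assert (I1 : Rabs (RInt (ff t r th) 0 e0) <= r * e0 ^ 3 / 3).
    { rewrite <- int_sq by lra. apply abs_RInt_maj; try lra.
      apply cont_on_glob, ff_cont. apply cont_on_glob; intros; apply cex; auto_derive; auto.
      intros x Hx. apply ff_bound; lra. }
    assert (I2 : Rabs (bd t r th e0) <= r * e0 ^ 3 / 4).
    { eapply Rle_trans. apply bd_bound2; auto. right.
      replace (r / (4 * t * e0)) with (r * / t / (4 * e0)) by fld. rewrite Eit. field. lra. }
    assert (I3 : Rabs (RInt (HH t r th) e0 b) <= 3 * r / 4 / e0).
    { eapply Rle_trans. apply abs_RInt_maj with (m := fun z => 3 * r / 4 / z ^ 2); try lra.
      apply cont_on_glob, HH_cont.
      intros z Hz. apply cex. auto_derive. assert (0 < z ^ 2) by (apply pow_lt; lra). simpl in *. lra.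
      intros z Hz. apply HH_bound; lra.
      apply int_inv_sq; lra. }
    assert (I4 : / t * (3 * r / 4 / e0) = 3 / 4 * r * e0 ^ 3) by (rewrite Eit; field; lra).
    assert (B1 := bd_bound1 t r th b Ht Hb1).
    assert (B2 := Rate b Hb1).
    assert (T : Rabs (RInt (ff t r th) 0 b) <= r * e0 ^ 3 / 3 + / t / b + r * e0 ^ 3 / 4 + / t * (3 * r / 4 / e0)).
    { rewrite <- Ech.
      replace (RInt (ff t r th) 0 e0 + (bd t r th b - bd t r th e0 - / t * RInt (HH t r th) e0 b)) with
        (RInt (ff t r th) 0 e0 + bd t r th b + - bd t r th e0 + - (/ t * RInt (HH t r th) e0 b)) by ring.
      eapply Rle_trans. apply Rabs_triang. eapply Rle_trans. apply Rplus_le_compat_r. apply Rabs_triang.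
      eapply Rle_trans. apply Rplus_le_compat_r. apply Rplus_le_compat_r. apply Rabs_triang.
      rewrite !Rabs_Ropp, Rabs_mult, (Rabs_right (/ t)) by lra.
      assert (/ t * Rabs (RInt (HH t r th) e0 b) <= / t * (3 * r / 4 / e0)) by (apply Rmult_le_compat_l; lra).
      lra. }
    assert (Rabs (- / t * LG) <= Rabs (RInt (ff t r th) 0 b) + Rabs (RInt (ff t r th) 0 b - - / t * LG)).
    { rewrite <- (Rabs_Ropp (RInt (ff t r th) 0 b - - / t * LG)). eapply Rle_trans; [|apply Rabs_triang]. right. f_equal. ring. }
    replace ((/ t + (/ t + / t * (3 * r / 4))) / b) with (/ t / b + (/ t + / t * (3 * r / 4)) / b) by fld.
    assert (0 < r * e0 ^ 3) by nra.
    lra.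
Qed.

End Helpers.

Lemma dist_pos (x y : R3) : x <> y -> 0 < dist3 x y.
Proof.
  destruct x as [[x1 x2] x3], y as [[y1 y2] y3]. intros Hne. unfold dist3. apply sqrt_lt_R0.
  destruct (Req_dec (x1 - y1) 0); destruct (Req_dec (x2 - y2) 0); destruct (Req_dec (x3 - y3) 0);
  try (assert (0 < (x1 - y1) ^ 2) by (apply pow2_gt_0; auto)); try (assert (0 < (x2 - y2) ^ 2) by (apply pow2_gt_0; auto));
  try (assert (0 < (x3 - y3) ^ 2) by (apply pow2_gt_0; auto)); try nra.
  exfalso. apply Hne. repeat f_equal; lra.
Qed.

Lemma integrand_eq t x y e : dist3 x y <> 0 ->
  integrand t x y e = (/ (PI * dist3 x y) * ff t (dist3 x y) (- (PI / 2)) e, / (PI * dist3 x y) * ff t (dist3 x y) 0 e).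
Proof.
  intros Hr. unfold integrand, R0ker, cexpi, ff. set (r := dist3 x y) in *.
  assert (HP : PI <> 0) by (apply Rgt_not_eq, PI_RGT_0).
  replace (t * (e ^ 4 + e ^ 2) + - (PI / 2)) with (t * (e ^ 4 + e ^ 2) - PI / 2) by ring.
  rewrite cos_m_PI2. replace (t * (e ^ 4 + e ^ 2) + 0) with (t * (e ^ 4 + e ^ 2)) by ring.
  unfold Cdiv, Cminus, Cplus, Copp, Cinv, RtoC, Cmult; cbn [fst snd].
  rewrite cos_neg, sin_neg, cos_neg, sin_neg.
  assert (0 < 1 + 2 * e ^ 2) by nra.
  f_equal; field; repeat split; try lra; nra.
Qed.

Lemma rate_eps (Fn : R -> R) L c0 : (forall b, 1 <= b -> Rabs (Fn b - L) <= c0 / b) ->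
  forall eps, 0 < eps -> exists M, forall b, M < b -> Rabs (Fn b - L) < eps.
Proof.
  intros H eps He. exists (1 + Rabs c0 / eps). intros b Hb.
  assert (0 <= Rabs c0 / eps) by (apply Rmult_le_pos; [apply Rabs_pos| apply Rlt_le, Rinv_0_lt_compat; lra]).
  eapply Rle_lt_trans. apply H. assert (0 <= Rabs c0 / eps) by auto. lra.
  assert (Rabs c0 < eps * b).
  { assert (Rabs c0 / eps * eps = Rabs c0) by (field; lra). nra. }
  assert (c0 <= Rabs c0) by apply Rle_abs.
  apply (Rmult_lt_reg_r b); [lra|]. unfold Rdiv. rewrite Rmult_assoc, Rinv_l by lra. lra.
Qed.

Lemma mul_small (kk X e : R) : 0 < e -> 0 <= X -> X < e / (Rabs kk + 1) -> Rabs kk * X < e.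
Proof.
  intros He HX H. assert (0 <= Rabs kk) by apply Rabs_pos.
  assert (Hq : e / (Rabs kk + 1) * (Rabs kk + 1) = e) by (field; lra).
  assert (0 < e / (Rabs kk + 1)) by (apply Rdiv_lt_0_compat; lra).
  assert (Rabs kk * X <= Rabs kk * (e / (Rabs kk + 1))) by (apply Rmult_le_compat_l; lra).
  nra.
Qed.

Lemma improper_ok t x y L1 L2 c1 c2 : dist3 x y <> 0 ->
  (forall b, 1 <= b -> Rabs (RInt (ff t (dist3 x y) (- (PI / 2))) 0 b - L1) <= c1 / b) ->
  (forall b, 1 <= b -> Rabs (RInt (ff t (dist3 x y) 0) 0 b - L2) <= c2 / b) ->
  improper_integral_0_infty (integrand t x y) (/ (PI * dist3 x y) * L1, / (PI * dist3 x y) * L2).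
Proof.
  intros Hr H1 H2. set (r := dist3 x y) in *.
  set (k := / (PI * r)).
  unfold improper_integral_0_infty, is_RInt_gen, filterlimi, filter_le, filtermapi.
  intros P [eps HP].
  assert (Hk : 0 < Rabs k + 1) by (assert (0 <= Rabs k) by apply Rabs_pos; lra).
  assert (He : 0 < eps / (Rabs k + 1)) by (apply Rdiv_lt_0_compat; [apply cond_pos|auto]).
  destruct (rate_eps _ _ _ H1 _ He) as [M1 HM1].
  destruct (rate_eps _ _ _ H2 _ He) as [M2 HM2].
  apply Filter_prod with (fun a => a = 0) (fun b => Rmax M1 M2 < b).
  - reflexivity.
  - exists (Rmax M1 M2). auto.
  - intros a b Ha Hb. subst a. cbn [fst snd].
    assert (Hb1 : M1 < b) by (eapply Rle_lt_trans; [apply Rmax_l| exact Hb]).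
    assert (Hb2 : M2 < b) by (eapply Rle_lt_trans; [apply Rmax_r| exact Hb]).
    exists (k * RInt (ff t r (- (PI / 2))) 0 b, k * RInt (ff t r 0) 0 b). split.
    + eapply is_RInt_ext.
      2: apply (is_RInt_fct_extend_pair (fun e => (k * ff t r (- (PI / 2)) e, k * ff t r 0 e))).
      * intros e _. rewrite integrand_eq by auto. reflexivity.
      * cbn [fst snd]. apply (is_RInt_scal (V:=R_NormedModule) (ff t r (- (PI / 2)))).
        apply (RInt_correct (V:=R_CompleteNormedModule)).
        apply (ex_RInt_continuous (V:=R_CompleteNormedModule)). intros; apply ff_cont.
      * cbn [fst snd]. apply (is_RInt_scal (V:=R_NormedModule) (ff t r 0)).
        apply (RInt_correct (V:=R_CompleteNormedModule)).
        apply (ex_RInt_continuous (V:=R_CompleteNormedModule)). intros; apply ff_cont.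
    + apply HP. split.
      * unfold ball; simpl. unfold AbsRing_ball, abs, minus, plus, opp; simpl.
        specialize (HM1 b Hb1).
        replace (k * RInt (ff t r (- (PI / 2))) 0 b + - (k * L1)) with (k * (RInt (ff t r (- (PI / 2))) 0 b - L1)) by ring.
        rewrite Rabs_mult. apply mul_small; auto. apply cond_pos. apply Rabs_pos.
      * unfold ball; simpl. unfold AbsRing_ball, abs, minus, plus, opp; simpl.
        specialize (HM2 b Hb2).
        replace (k * RInt (ff t r 0) 0 b + - (k * L2)) with (k * (RInt (ff t r 0) 0 b - L2)) by ring.
        rewrite Rabs_mult. apply mul_small; auto. apply cond_pos. apply Rabs_pos.
Qed.

Lemma Cmod_le (a0 b0 : R) : Cmod (a0, b0) <= Rabs a0 + Rabs b0.
Proof.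
  unfold Cmod; cbn [fst snd].
  assert (0 <= Rabs a0 + Rabs b0) by (assert (0 <= Rabs a0) by apply Rabs_pos; assert (0 <= Rabs b0) by apply Rabs_pos; lra).
  rewrite <- (sqrt_pow2 (Rabs a0 + Rabs b0)) by auto.
  apply sqrt_le_1_alt.
  rewrite <- (pow2_abs a0), <- (pow2_abs b0).
  assert (0 <= Rabs a0) by apply Rabs_pos; assert (0 <= Rabs b0) by apply Rabs_pos. nra.
Qed.

Lemma Rpower_32 t : 0 < t -> Rpower t (- (3 / 2)) = / (t * sqrt t).
Proof.
  intros Ht. rewrite Rpower_Ropp. replace (3 / 2) with (1 + / 2) by field.
  rewrite Rpower_plus, Rpower_1, Rpower_sqrt; auto.
Qed.

Lemma Rpower_pos' t y : 0 < Rpower t y.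
Proof. unfold Rpower. apply exp_pos. Qed.

Lemma Rpower_e0 t : 0 < t -> Rpower t (- (1 / 4)) ^ 4 * t = 1 /\ Rpower t (- (1 / 4)) ^ 3 = Rpower t (- (3 / 4)).
Proof.
  intros Ht. set (e0 := Rpower t (- (1 / 4))).
  assert (He : 0 < e0) by apply Rpower_pos'.
  split.
  - rewrite <- (Rpower_pow 4 e0 He). unfold e0. rewrite Rpower_mult.
    replace (- (1 / 4) * INR 4) with (Ropp 1) by (simpl; field).
    rewrite Rpower_Ropp, Rpower_1 by auto. field. lra.
  - rewrite <- (Rpower_pow 3 e0 He). unfold e0. rewrite Rpower_mult.
    f_equal. simpl. field.
Qed.

Lemma sqrt_2t t : 0 < t -> / sqrt (2 * t) <= / sqrt t.
Proof.
  intros Ht. apply Rinv_le_contravar. apply sqrt_lt_R0; lra. apply sqrt_le_1_alt. lra.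
Qed.

Theorem proposition2p1 :
  (exists C0 : R, 0 < C0 /\
     forall (t : R) (x y : R3), 1 < t -> x <> y ->
       exists l : C, improper_integral_0_infty (integrand t x y) l /\
                     Cmod l <= C0 * Rpower t (- (3 / 2))) /\
  (exists C1 : R, 0 < C1 /\
     forall (t : R) (x y : R3), 0 < t <= 1 -> x <> y ->
       exists l : C, improper_integral_0_infty (integrand t x y) l /\
                     Cmod l <= C1 * Rpower t (- (3 / 4))).
Proof.
  assert (HPI : 0 < PI) by apply PI_RGT_0.
  split.
  - exists (56 / PI). split. apply Rdiv_lt_0_compat; lra.
    intros t x y Ht Hxy.
    assert (Hr := dist_pos x y Hxy). set (r := dist3 x y) in *.
    destruct (theta_main t r (- (PI / 2))) as [L1 [c1 [R1 [B1 _]]]]; try lra.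
    destruct (theta_main t r 0) as [L2 [c2 [R2 [B2 _]]]]; try lra.
    exists (/ (PI * r) * L1, / (PI * r) * L2). split.
    + apply improper_ok with c1 c2; auto. exact (Rgt_not_eq _ _ Hr).
    + eapply Rle_trans. apply Cmod_le.
      specialize (B1 Ht). specialize (B2 Ht).
      assert (Hk : 0 < / (PI * r)) by (apply Rinv_0_lt_compat; nra).
      rewrite !Rabs_mult, (Rabs_right (/ (PI * r))) by lra.
      rewrite Rpower_32 by lra.
      assert (Hs := sqrt_2t t ltac:(lra)).
      assert (Hst : 0 < sqrt t) by (apply sqrt_lt_R0; lra).
      assert (Hst2 : 0 < sqrt (2 * t)) by (apply sqrt_lt_R0; lra).
      assert (Bd : 28 * r / sqrt (2 * t) / t <= 28 * r / sqrt t / t).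
      { unfold Rdiv. apply Rmult_le_compat_r. apply Rlt_le, Rinv_0_lt_compat; lra.
        apply Rmult_le_compat_l; nra. }
      assert (E : / (PI * r) * (28 * r / sqrt t / t) = 28 / PI * / (t * sqrt t)) by (field; lra).
      assert (/ (PI * r) * Rabs L1 <= / (PI * r) * (28 * r / sqrt t / t)) by (apply Rmult_le_compat_l; lra).
      assert (/ (PI * r) * Rabs L2 <= / (PI * r) * (28 * r / sqrt t / t)) by (apply Rmult_le_compat_l; lra).
      replace (56 / PI * / (t * sqrt t)) with (2 * (28 / PI * / (t * sqrt t))) by (field; lra).
      lra.
  - exists (4 / PI). split. apply Rdiv_lt_0_compat; lra.
    intros t x y Ht Hxy.
    assert (Hr := dist_pos x y Hxy). set (r := dist3 x y) in *.
    destruct (theta_main t r (- (PI / 2))) as [L1 [c1 [R1 [_ S1]]]]; try lra.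
    destruct (theta_main t r 0) as [L2 [c2 [R2 [_ S2]]]]; try lra.
    exists (/ (PI * r) * L1, / (PI * r) * L2). split.
    + apply improper_ok with c1 c2; auto. exact (Rgt_not_eq _ _ Hr).
    + eapply Rle_trans. apply Cmod_le.
      destruct (Rpower_e0 t ltac:(lra)) as [E4 E3].
      set (e0 := Rpower t (- (1 / 4))) in *.
      assert (He : 0 < e0) by apply Rpower_pos'.
      specialize (S1 e0 He E4). specialize (S2 e0 He E4).
      assert (Hk : 0 < / (PI * r)) by (apply Rinv_0_lt_compat; nra).
      rewrite !Rabs_mult, (Rabs_right (/ (PI * r))) by lra.
      rewrite <- E3.
      assert (E : / (PI * r) * (2 * r * e0 ^ 3) = 2 / PI * e0 ^ 3) by (field; lra).
      assert (/ (PI * r) * Rabs L1 <= / (PI * r) * (2 * r * e0 ^ 3)) by (apply Rmult_le_compat_l; lra).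
      assert (/ (PI * r) * Rabs L2 <= / (PI * r) * (2 * r * e0 ^ 3)) by (apply Rmult_le_compat_l; lra).
      replace (4 / PI * e0 ^ 3) with (2 * (2 / PI * e0 ^ 3)) by (field; lra).
      lra.
Qed.
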